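(* Let $S$ be an entropy function for a finite set $X$, and let $A_1\subset\cdots\subset A_m$ and $B_1\subset\cdots\subset B_n$ be subsets of $X$ with $A_m\cap B_n=\emptyset$. Then there exists an EDF $f$ for $S$ such that: $\sum_{x\in A_i}f(x)=S(A_i)$ for all $i=1,\dots,m$; $\sum_{y\in B_j}f(y)=-S(B_j)$ for all $j=1,\dots,n$; $f(x)\ge0$ for all $x\in A_1$; and $f(y)\le 0$ for all $y\in B_1$.
   Context: An entropy function for a finite set $X$ is a function $S:2^X\to[0,\infty)$ with $S(\emptyset)=0$, $S(A)+S(B)\ge S(A\cap B)+S(A\cup B)$ and $S(A)+S(B)\ge S(A\setminus B)+S(B\setminus A)$ for all $A,B\subseteq X$. An entanglement distribution function (EDF) for $S$ is a function $f:X\to\mathbb R$ with $\big|\sum_{x\in A}f(x)\big|\le S(A)$ for all $A\subseteq X$. *)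

(* Defs.v *)
From mathcomp Require Import all_boot all_order all_algebra.
From mathcomp Require Import reals.
Set Implicit Arguments. Unset Strict Implicit. Unset Printing Implicit Defensive.
Import Order.TTheory GRing.Theory Num.Theory.
Local Open Scope ring_scope.

Definition entropy_function (R : realType) (X : finType) (S : {set X} -> R) : Prop :=
  [/\ forall A, 0 <= S A,
      S set0 = 0,
      forall A B, S (A :&: B) + S (A :|: B) <= S A + S B
    & forall A B, S (A :\: B) + S (B :\: A) <= S A + S B].

Definition EDF (R : realType) (X : finType) (S : {set X} -> R) (f : X -> R) : Prop :=
  forall A : {set X}, `| \sum_(x in A) f x | <= S A.

(* Main.v *)
From mathcomp Require Import all_boot all_order all_algebra.
Require Import Defs.
From mathcomp Require Import reals.
From mathcomp Require Import zify ring lra.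
Set Implicit Arguments. Unset Strict Implicit. Unset Printing Implicit Defensive.
Import Order.TTheory GRing.Theory Num.Theory.
Local Open Scope ring_scope.

Section Greedy.
Variables (R : realType) (Y : finType) (h : {set Y} -> R) (rho : Y -> nat).
Hypothesis rho_inj : injective rho.
Hypothesis h0 : h set0 = 0.
Hypothesis hsub : forall U V, h (U :&: V) + h (U :|: V) <= h U + h V.

Definition L k := [set z | (rho z < k)%N].
Definition gf y := h (L (rho y).+1) - h (L (rho y)).

Lemma split_k (P : pred Y) k :
  \sum_(z | P z && (rho z < k.+1)%N) gf z =
  \sum_(z | P z && (rho z < k)%N) gf z + \sum_(z | P z && (rho z == k)) gf z.
Proof.
rewrite (bigID (fun z => (rho z < k)%N)) /=; congr (_ + _); apply: eq_bigl => z.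
  by case: (P z) => //=; apply/andP/idP => [[]//|hz]; split=> //; lia.
by case: (P z) => //=; apply/andP/eqP => [[a b]|e]; [lia | split; lia].
Qed.

Lemma greedy_le k (C : {set Y}) : \sum_(z | (z \in C) && (rho z < k)%N) gf z <= h (C :&: L k).
Proof.
elim: k => [|k IH].
  rewrite big_pred0; last by move=> z; rewrite ltn0 andbF.
  suff -> : C :&: L 0 = set0 by rewrite h0.
  by apply/setP=> z; rewrite !inE ltn0 andbF.
rewrite split_k; case: (pickP (fun z => rho z == k)) => [y /eqP ry | none].
- have LS : L k.+1 = y |: L k.
    apply/setP=> z; rewrite !inE ltnS leq_eqVlt.
    case: (z =P y) => [->|nzy]; first by rewrite ry eqxx.
    case: eqP => //= rz; case: nzy; apply: rho_inj; by rewrite rz ry.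
  have E : forall P : pred Y, \sum_(z | P z && (rho z == k)) gf z = \sum_(z | P z && (z == y)) gf z.
    move=> P; apply: eq_bigl => z; congr (_ && _); apply/eqP/eqP => [rz|->//].
    by apply: rho_inj; rewrite rz ry.
  rewrite E; case Cy : (y \in C).
  + rewrite [X in _ + X](big_pred1 y); last by move=> z; rewrite /=; case: eqP => [->|_]; rewrite ?Cy ?andbF ?andbT.
    have := hsub (C :&: L k.+1) (L k).
    have -> : C :&: L k.+1 :&: L k = C :&: L k.
      by apply/setP=> z; rewrite !inE; case: (z \in C) => //=; apply/andP/idP => [[]//|hz]; split=>//; lia.
    have -> : C :&: L k.+1 :|: L k = L k.+1.
      apply/setP=> z; rewrite LS !inE; case: eqP => [->|_]; rewrite ?Cy //=; by case: (z \in C); case: (rho z < k)%N.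
    rewrite /gf ry; lra.
  + rewrite [X in _ + X]big_pred0 ?addr0; last by move=> z; case: (@eqP _ z y) => [->|_]; rewrite ?Cy ?andbF.
    suff -> : C :&: L k.+1 = C :&: L k by [].
    apply/setP=> z; rewrite LS !inE; case: eqP => [->|_]; rewrite ?Cy //=.
- rewrite [X in _ + X]big_pred0 ?addr0; last by move=> z; rewrite none andbF.
  suff -> : L k.+1 = L k by [].
  apply/setP=> z; rewrite !inE; have := none z; rewrite /= => nz; apply/idP/idP; lia.
Qed.

Lemma greedy_eq k : \sum_(z | (rho z < k)%N) gf z = h (L k).
Proof.
elim: k => [|k IH].
  rewrite big_pred0; last by move=> z; rewrite ltn0. suff -> : L 0 = set0 by rewrite h0.
  by apply/setP=> z; rewrite !inE ltn0.
have := split_k predT k; rewrite /= => ->; rewrite IH.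
case: (pickP (fun z => rho z == k)) => [y /eqP ry | none].
- rewrite (big_pred1 y); last first.
    move=> z; rewrite /=; apply/eqP/eqP => [rz|->//]; apply: rho_inj; by rewrite rz ry.
  rewrite /gf ry; lra.
- rewrite big_pred0 ?addr0; last by move=> z; rewrite none.
  congr h; apply/setP=> z; rewrite !inE; have := none z; rewrite /= => nz; apply/idP/idP; lia.
Qed.

Lemma gf_step y : gf y = h (y |: L (rho y)) - h (L (rho y)).
Proof.
rewrite /gf; congr (h _ - _); apply/setP=> z; rewrite !inE.
case: (@eqP _ z y) => [->|nzy]; first by rewrite ltnSn.
rewrite ltnS leq_eqVlt; case: (@eqP _ (rho z) (rho y)) => //= e.
by case: nzy; apply: rho_inj.
Qed.

Lemma tight (T : {set Y}) :
  (forall y z, y \in T -> z \notin T -> (rho y < rho z)%N) ->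
  \sum_(z in T) gf z = h T.
Proof.
move=> dn; set k := \max_(y in T) (rho y).+1.
have LT : L k = T.
  apply/setP=> z; rewrite !inE; case Tz: (z \in T).
    by rewrite /k; apply: leq_bigmax_cond.
  apply/negbTE; rewrite -leqNgt; apply/bigmax_leqP => y Ty.
  by apply: dn => //; rewrite Tz.
rewrite -{2}LT -greedy_eq; apply: eq_bigl => z.
by rewrite -LT inE.
Qed.

Lemma greedy_all (C : {set Y}) : \sum_(z in C) gf z <= h C.
Proof.
set k := \max_(y : Y) (rho y).+1.
have Hk : forall z, (rho z < k)%N by move=> z; rewrite /k; apply: leq_bigmax_cond.
have LT : L k = setT by apply/setP=> z; rewrite !inE Hk.
have := greedy_le k C; rewrite LT setIT; apply: le_trans.
by rewrite le_eqVlt; apply/orP; left; apply/eqP; apply: eq_bigl => z; rewrite Hk andbT.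
Qed.

End Greedy.

Section Pur.
Variables (R : realType) (X : finType) (S : {set X} -> R).
Hypothesis S0 : forall A, 0 <= S A.
Hypothesis Sset0 : S set0 = 0.
Hypothesis Ssub : forall A B, S (A :&: B) + S (A :|: B) <= S A + S B.
Hypothesis Swm : forall A B, S (A :\: B) + S (B :\: A) <= S A + S B.

Definition pre (C : {set option X}) : {set X} := [set x | Some x \in C].
Definition St (C : {set option X}) : R :=
  if None \in C then S (~: pre C) else S (pre C).

Lemma preI C D : pre (C :&: D) = pre C :&: pre D.
Proof. by apply/setP=> x; rewrite !inE. Qed.
Lemma preU C D : pre (C :|: D) = pre C :|: pre D.
Proof. by apply/setP=> x; rewrite !inE. Qed.
Lemma preC C : pre (~: C) = ~: pre C.
Proof. by apply/setP=> x; rewrite !inE. Qed.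
Lemma preIm (E : {set X}) : pre (Some @: E) = E.
Proof. by apply/setP=> x; rewrite !inE mem_imset //; move=> a b [->]. Qed.
Lemma NoneIm (E : {set X}) : None \in (Some @: E) = false.
Proof. by apply/negbTE/imsetP => -[]. Qed.

Lemma St_ge0 C : 0 <= St C.
Proof. by rewrite /St; case: ifP. Qed.

Lemma St0 : St set0 = 0.
Proof.
rewrite /St inE; suff -> : pre set0 = set0 by [].
by apply/setP=> x; rewrite !inE.
Qed.

Lemma StT : St setT = 0.
Proof.
rewrite /St inE; suff -> : ~: pre setT = set0 by [].
by apply/setP=> x; rewrite !inE.
Qed.

Lemma St_sub C D : St (C :&: D) + St (C :|: D) <= St C + St D.
Proof.
rewrite /St !inE preI preU.
set c := pre C; set d := pre D; clearbody c d.
case: (None \in C); case: (None \in D) => /=.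
- rewrite setCI setCU; have := Ssub (~: c) (~: d); lra.
- have := Swm d (~: c).
  have -> : d :\: ~: c = c :&: d by apply/setP=> x; rewrite !inE; case: (x \in c); case: (x \in d).
  have -> : ~: c :\: d = ~: (c :|: d) by apply/setP=> x; rewrite !inE; case: (x \in c); case: (x \in d).
  lra.
- have := Swm c (~: d).
  have -> : c :\: ~: d = c :&: d by apply/setP=> x; rewrite !inE; case: (x \in c); case: (x \in d).
  have -> : ~: d :\: c = ~: (c :|: d) by apply/setP=> x; rewrite !inE; case: (x \in c); case: (x \in d).
  lra.
- exact: Ssub.
Qed.

End Pur.

Ltac pw y := repeat match goal with
  | Hs : is_true (?P \subset ?Q) |- _ => move/subsetP: Hs => /(_ y)
 end; rewrite ?inE.

Ltac bcase := repeat match goal with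
  | |- context [?a \in ?b] => case: (a \in b)
  | |- context [?a == ?b] => case: (a == b)
  end.

Section Main.
Variables (R : realType) (X : finType) (S : {set X} -> R) (m n : nat)
  (A : 'I_m.+1 -> {set X}) (B : 'I_n.+1 -> {set X}).
Hypothesis S0 : forall A, 0 <= S A.
Hypothesis Sset0 : S set0 = 0.
Hypothesis Ssub : forall A B, S (A :&: B) + S (A :|: B) <= S A + S B.
Hypothesis Swm : forall A B, S (A :\: B) + S (B :\: A) <= S A + S B.
Hypothesis hA : forall i j : 'I_m.+1, (i <= j)%N -> A i \subset A j.
Hypothesis hB : forall i j : 'I_n.+1, (i <= j)%N -> B i \subset B j.
Hypothesis hAB : A ord_max :&: B ord_max = set0.

Local Notation Y := (option X).

Lemma disjAB i j x : x \in A i -> x \in B j -> False.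
Proof.
move=> xa xb; have : x \in A ord_max :&: B ord_max.
  by rewrite inE (subsetP (@hA i ord_max (leq_ord i)) _ xa) (subsetP (@hB j ord_max (leq_ord j)) _ xb).
by rewrite hAB inE.
Qed.

Definition A1 : {set Y} := Some @: A ord0.
Definition B1 : {set Y} := Some @: B ord0.
Definition adm (C D : {set Y}) := (C :\: B1 \subset D) && (D \subset C :|: A1).
Definition Dopt C := Order.arg_min C (adm C) (St S).
Definition H C := St S (Dopt C).

Lemma admCC C : adm C C.
Proof. by rewrite /adm subsetDl subsetUl. Qed.

Lemma Hspec C : adm C (Dopt C) /\ forall D, adm C D -> H C <= St S D.
Proof.
rewrite /H /Dopt; case: (arg_minP (St S) (admCC C)) => D aD mn; split=> //.
Qed.

Lemma Hle C : H C <= St S C.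
Proof. by case: (Hspec C) => _; apply; apply: admCC. Qed.

Lemma Hge0 C : 0 <= H C.
Proof. exact: St_ge0. Qed.

Lemma H0 : H set0 = 0.
Proof. apply/le_anti; rewrite Hge0 andbT; have := Hle set0; by rewrite St0. Qed.

Lemma HT : H setT = 0.
Proof. apply/le_anti; rewrite Hge0 andbT; have := Hle setT; by rewrite StT. Qed.

Lemma Hsub C C' : H (C :&: C') + H (C :|: C') <= H C + H C'.
Proof.
case: (Hspec C) => /andP [a1 a2] _; case: (Hspec C') => /andP [b1 b2] _.
set D := Dopt C in a1 a2 *; set D' := Dopt C' in b1 b2 *.
have h1 : H (C :&: C') <= St S (D :&: D').
  case: (Hspec (C :&: C')) => _; apply; apply/andP; split; apply/subsetP=> y; pw y;
  by case: (y \in C); case: (y \in C'); case: (y \in D); case: (y \in D'); case: (y \in A1); case: (y \in B1).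
have h2 : H (C :|: C') <= St S (D :|: D').
  case: (Hspec (C :|: C')) => _; apply; apply/andP; split; apply/subsetP=> y; pw y;
  by case: (y \in C); case: (y \in C'); case: (y \in D); case: (y \in D'); case: (y \in A1); case: (y \in B1).
have := St_sub Ssub Swm D D'; have e1 : H C = St S D by []; have e2 : H C' = St S D' by []; rewrite e1 e2; lra.
Qed.

Lemma Hmono C y : y \in A1 -> H C <= H (y |: C).
Proof.
move=> yA; case: (Hspec (y |: C)) => /andP [a1 a2] _; case: (Hspec C) => _; apply.
have nB : (y \in B1) = false.
  apply/negP; case/imsetP: yA => x xA -> /imsetP [x' xB [e]]; subst x'; exact: disjAB xA xB.
apply/andP; split; apply/subsetP=> z; pw z; case: (@eqP _ z y) => [->|]; rewrite ?yA ?nB //=; by bcase.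
Qed.

Lemma Hanti C y : y \in B1 -> H (y |: C) <= H C.
Proof.
move=> yB; case: (Hspec C) => /andP [a1 a2] _; case: (Hspec (y |: C)) => _; apply.
have nA : (y \in A1) = false.
  apply/negP; case/imsetP: yB => x xB -> /imsetP [x' xA [e]]; subst x'; exact: disjAB xA xB.
apply/andP; split; apply/subsetP=> z; pw z; case: (@eqP _ z y) => [->|]; rewrite ?yB ?nA //=; by bcase.
Qed.

Lemma Htight (T : {set Y}) : A1 \subset T -> (forall y, y \in T -> y \in B1 -> False) -> H T = St S T.
Proof.
move=> sA dB; case: (Hspec T) => /andP [a1 a2] _.
rewrite /H; suff -> : Dopt T = T by [].
apply/eqP; rewrite eqEsubset; apply/andP; split; apply/subsetP => y.
  move=> yD; move/subsetP: a2 => /(_ y yD); rewrite inE => /orP [//|]; exact: (subsetP sA).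
move=> yT; apply: (subsetP a1); rewrite inE yT andbT.
by apply/negP => yB; exact: dB yT yB.
Qed.


Definition Tc (t : 'I_m.+1 + 'I_n.+1) : {set Y} :=
  match t with inl i => Some @: A i | inr j => ~: (Some @: B j) end.

Lemma chain t t' : (Tc t \subset Tc t') || (Tc t' \subset Tc t).
Proof.
case: t => [i|j]; case: t' => [i'|j'] /=.
- case: (leqP i i') => h; first by rewrite imsetS ?hA.
  by rewrite orbC imsetS // hA // ltnW.
- apply/orP; left; apply/subsetP => y /imsetP [x xA ->]; rewrite inE mem_imset; last by move=> a b [].
  apply/negP => xB; exact: disjAB xA xB.
- apply/orP; right; apply/subsetP => y /imsetP [x xA ->]; rewrite inE mem_imset; last by move=> a b [].
  apply/negP => xB; exact: disjAB xA xB.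
- case: (leqP j j') => h; first by rewrite orbC setCS imsetS ?hB.
  by rewrite setCS imsetS // hB // ltnW.
Qed.

Definition cnt (y : Y) := #|[set t | y \notin Tc t]|.
Definition rho (y : Y) : nat := (cnt y * #|{: Y}| + enum_rank y)%N.

Lemma rho_inj : injective rho.
Proof.
move=> y z e; have : (rho y %% #|{: Y}| = rho z %% #|{: Y}|)%N by rewrite e.
rewrite /rho !modnMDl !modn_small ?ltn_ord // => /val_inj.
exact: fintype.enum_rank_inj.
Qed.

Lemma rho_dn t y z : y \in Tc t -> z \notin Tc t -> (rho y < rho z)%N.
Proof.
move=> yT zT.
have hc : (cnt y < cnt z)%N.
  apply: proper_card; apply/properP; split.
    apply/subsetP => t'; rewrite !inE => yT'.
    case/orP: (chain t' t) => s.
      by apply/negP => /(subsetP s) zt; rewrite zt in zT.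
    by rewrite (subsetP s _ yT) in yT'.
  by exists t; rewrite inE ?yT ?zT.
have ry := ltn_ord (enum_rank y); have rz := ltn_ord (enum_rank z).
have hm : ((cnt y).+1 * #|{: Y}| <= cnt z * #|{: Y}|)%N by rewrite leq_mul2r hc orbT.
rewrite mulSn in hm; rewrite /rho.
move: hm ry rz; set N := #|{: Y}|; set a := (cnt y * N)%N; set b := (cnt z * N)%N.
set u := nat_of_ord (enum_rank y); set v := nat_of_ord (enum_rank z); lia.
Qed.

Lemma StIm (E : {set X}) : St S (Some @: E) = S E.
Proof. by rewrite /St NoneIm preIm. Qed.
Lemma StCIm (E : {set X}) : St S (~: (Some @: E)) = S E.
Proof. by rewrite /St inE NoneIm /= preC preIm setCK. Qed.

Definition fY := gf H rho.

Lemma GA (C : {set Y}) : \sum_(z in C) fY z <= St S C.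
Proof. exact: le_trans (greedy_all rho_inj H0 Hsub C) (Hle C). Qed.

Lemma Tt t : \sum_(z in Tc t) fY z = St S (Tc t).
Proof.
rewrite (tight rho_inj H0 (T := Tc t)); last by move=> y z; exact: rho_dn.
apply: Htight.
  case: t => [i|j] /=; first by rewrite imsetS // hA.
  apply/subsetP => y /imsetP [x xA ->]; rewrite inE mem_imset; last by move=> a b [].
  apply/negP => xB; exact: disjAB xA xB.
case: t => [i|j] /= y.
  by case/imsetP => x xA -> /imsetP [x' xB [e]]; subst x'; exact: disjAB xA xB.
rewrite inE => yB yB1; move/negP: yB; apply; move: yB1; apply/subsetP; by rewrite imsetS // hB.
Qed.

Lemma Tot : \sum_(z in [set: Y]) fY z = 0.
Proof.
rewrite (tight rho_inj H0 (T := setT)) ?HT //.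
by move=> y z _; rewrite inE.
Qed.

Lemma sumC (E : {set Y}) : \sum_(z in E) fY z = - \sum_(z in ~: E) fY z.
Proof.
have := Tot; rewrite (big_setID (A := [set: Y]) E) setTI setTD => e.
apply/eqP; rewrite -addr_eq0; apply/eqP; exact: e.
Qed.

Lemma img (E : {set X}) : \sum_(x in E) fY (Some x) = \sum_(z in Some @: E) fY z.
Proof. by rewrite big_imset //; move=> a b _ _ []. Qed.

Lemma main_ex : exists f : X -> R,
    [/\ EDF S f,
        forall i, \sum_(x in A i) f x = S (A i),
        forall j, \sum_(y in B j) f y = - S (B j),
        forall x, x \in A ord0 -> 0 <= f x
      & forall y, y \in B ord0 -> f y <= 0].
Proof.
exists (fun x => fY (Some x)); split.
- move=> C; rewrite ler_norml img; apply/andP; split.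
    by rewrite sumC lerN2 -(StCIm C); apply: GA.
  by rewrite -(StIm C); apply: GA.
- by move=> i; rewrite img (Tt (inl i)) /= StIm.
- by move=> j; rewrite img sumC (Tt (inr j)) /= StCIm.
- move=> x xA; rewrite /fY (@gf_step _ _ H rho rho_inj) subr_ge0; apply: Hmono.
  by rewrite /A1 mem_imset //; move=> a b [].
- move=> x xB; rewrite /fY (@gf_step _ _ H rho rho_inj) subr_le0; apply: Hanti.
  by rewrite /B1 mem_imset //; move=> a b [].
Qed.

End Main.

Unset Implicit Arguments.
Set Strict Implicit.

Theorem theorem19 (R : realType) (X : finType) (S : {set X} -> R)
  (m n : nat) (A : 'I_m.+1 -> {set X}) (B : 'I_n.+1 -> {set X}) :
  entropy_function S ->
  (forall i j : 'I_m.+1, (i <= j)%N -> A i \subset A j) ->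
  (forall i j : 'I_n.+1, (i <= j)%N -> B i \subset B j) ->
  A ord_max :&: B ord_max = set0 ->
  exists f : X -> R,
    [/\ EDF S f,
        forall i, \sum_(x in A i) f x = S (A i),
        forall j, \sum_(y in B j) f y = - S (B j),
        forall x, x \in A ord0 -> 0 <= f x
      & forall y, y \in B ord0 -> f y <= 0].
Proof.
case=> S0 Sset0 Ssub Swm hA hB hAB.
exact: (main_ex S0 Sset0 Ssub Swm hA hB hAB).
Qed.
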